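(* Let $\psi(x,z)=\frac{1}{f(z)}P(x,\partial)e^{xz}$ be a Darboux transform of $e^{xz}$, with $f,g,P,Q$ as in the definition, so that $Q(x,\partial)P(x,\partial)=f(\partial)g(\partial)$. Put $\psi^*(x,z)=\frac{1}{g(z)}Q^*e^{-xz}$, where $Q^*$ is the formal adjoint of $Q$. Then for all integers $i,j\ge 0$, $$\mathrm{res}_z\big(\partial^i\psi(x,z)\cdot\partial^j\psi^*(x,z)\big)=0 .$$ Consequently, assuming $e^{-xz}\psi$ and $e^{xz}\psi^*$ are regular at $x=0$, the spaces $$V=\mathrm{span}\{\partial^i\psi(x,z)|_{x=0}\}\quad\text{and}\quad V^*=\mathrm{span}\{\partial^i\psi^*(x,z)|_{x=0}\}$$ are orthogonal with respect to the bilinear form $B(u,v)=\mathrm{res}_z\,u(z)v(z)$.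
   Context: Notation: $\partial=\frac{\partial}{\partial x}$. Darboux transform: there exist monic polynomials $f(z),g(z)$ and monic differential operators $P,Q$ with $\psi=\frac1{f(z)}Pe^{xz}$, $e^{xz}=\frac1{g(z)}Q\psi$, and $\mathrm{ord}\,P=\deg f$. Formal adjoint: defined by $(a(x)\partial^k)^*=(-\partial)^k\circ a(x)$, extended linearly. Residue: $\mathrm{res}_z$ denotes the coefficient of $z^{-1}$ in the Laurent expansion around $z=\infty$. The product $\partial^i\psi\,\partial^j\psi^*$ has the exponential factors $e^{xz}e^{-xz}$ cancel, so it is rational in $z$. *)

(* Defs.v *)
From HB Require Import structures.
From mathcomp Require Import all_boot all_order all_algebra.
Set Implicit Arguments. Unset Strict Implicit. Unset Printing Implicit Defensive.
Import Order.TTheory GRing.Theory Num.Theory.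
Local Open Scope ring_scope.

(* Algebraic model.
   - F : field of constants (e.g. C).
   - R : commutative F-algebra of "functions of x", with an F-linear
         derivation delta = d/dx.
   - A differential operator  sum_k a_k(x) d^k  is encoded by its coefficient
     list, i.e. a polynomial P : {poly R} with P`_k = a_k.
   - A function of the form  e^{xz} h(x,z)  with h : {poly R} (polynomial in z
     with coefficients in R) is encoded by h; likewise e^{-xz} h. *)

Section Defs.
Variables (F : fieldType) (R : comAlgType F).

(* d (e^{xz} h) = e^{xz} (dh/dx + z h) *)
Definition Dplus (delta : R -> R) (h : {poly R}) : {poly R} :=
  map_poly delta h + 'X * h.

(* d (e^{-xz} h) = e^{-xz} (dh/dx - z h) *)
Definition Dminus (delta : R -> R) (h : {poly R}) : {poly R} :=
  map_poly delta h - 'X * h.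

(* (sum_k a_k d^k) (e^{xz} h) = e^{xz} * apply_op delta P h *)
Definition apply_op (delta : R -> R) (P : {poly R}) (h : {poly R}) : {poly R} :=
  \sum_(k < size P) P`_k *: iter k (Dplus delta) h.

(* Formal adjoint: (a d^k)^* = (-d)^k o a, extended linearly.
   Q^* (e^{-xz} h) = e^{-xz} * apply_adj delta Q h *)
Definition apply_adj (delta : R -> R) (Q : {poly R}) (h : {poly R}) : {poly R} :=
  \sum_(k < size Q) iter k (fun u => - Dminus delta u) (Q`_k *: h).

Definition is_derivation (delta : R -> R) : Prop :=
  (forall (c : F) (a b : R), delta (c *: a + b) = c *: delta a + delta b) /\
  (forall a b : R, delta (a * b) = delta a * b + a * delta b).

Definition polyR (f : {poly F}) : {poly R} := map_poly (in_alg R) f.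

(* S is a differential subalgebra of "functions regular at x = 0" and ev is
   evaluation at x = 0 on S (an F-algebra morphism S -> F). *)
Definition regular_at0 (delta : R -> R) (S : pred R) (ev : R -> F) : Prop :=
  [/\ (forall c : F, c%:A \in S /\ ev c%:A = c),
      (forall a b, a \in S -> b \in S ->
         [/\ a + b \in S, a * b \in S, ev (a + b) = ev a + ev b &
             ev (a * b) = ev a * ev b]) &
      (forall a, a \in S -> delta a \in S)].

End Defs.

(* Residue at z = infinity (coefficient of z^{-1} in the Laurent expansion
   around z = infinity) of the rational function N(z)/D(z), D monic of
   degree d.  Writing D(z) = z^d (a_0 + a_1 z^{-1} + ... + a_d z^{-d}) with
   a_j = D_{d-j}, a_0 = 1, we have 1/D = z^{-d} sum_k e_k z^{-k} where
   (e_k) is the inverse power series of sum_j a_j w^j: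
   e_0 = 1, e_k = - sum_{j=1}^{k} a_j e_{k-j}.  Then the coefficient of
   z^{-1} in N/D = sum_i N_i z^{i-d} sum_k e_k z^{-k} is
   sum_{i >= d-1} N_i e_{i+1-d}. *)
Section Residue.
Variable T : comNzRingType.

Definition rev_coef (D : {poly T}) (j : nat) : T :=
  if (j <= (size D).-1)%N then D`_((size D).-1 - j) else 0.

Fixpoint inv_series (D : {poly T}) (n : nat) : seq T :=
  match n with
  | 0 => [:: 1]
  | n'.+1 => let s := inv_series D n' in
      rcons s (- \sum_(1 <= j < n'.+2) rev_coef D j * s`_(n'.+1 - j))
  end.

Definition inv_coef (D : {poly T}) (k : nat) : T := (inv_series D k)`_k.

Definition res_inf (N D : {poly T}) : T :=
  \sum_(i < size N)
     (if ((size D).-1 <= i.+1)%N then N`_i * inv_coef D (i.+1 - (size D).-1)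
      else 0).
End Residue.

(* Main.v *)
Require Import Defs.
From HB Require Import structures.
From mathcomp Require Import all_boot all_order all_algebra.
From Stdlib Require Import FunctionalExtensionality.
Set Implicit Arguments. Unset Strict Implicit. Unset Printing Implicit Defensive.
Import GRing.Theory.
Local Open Scope ring_scope.
From Stdlib Require Import Lia.
Lemma sum_ext (V : nmodType) n m (G : nat -> V) : (n <= m)%N ->
  (forall i, (n <= i)%N -> (i < m)%N -> G i = 0) -> \sum_(i < n) G i = \sum_(i < m) G i.
Proof.
move=> hnm hz; rewrite (big_ord_widen m G hnm) big_mkcond; apply: eq_bigr => i _.
by case: ifP => // /negbT; rewrite -leqNgt => h; rewrite hz.
Qed.
Lemma size_map_le (R1 R2 : nzSemiRingType) (f : R1 -> R2) (p : {poly R1}) :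
  (size (map_poly f p) <= size p)%N.
Proof. rewrite /map_poly; exact: size_poly. Qed.
Lemma natx1 (m p L j : nat) : (m <= (m + p + L + j + 1) - j)%N.
Proof. apply/leP. rewrite -!plusE -minusE. lia. Qed.
Lemma e1 d i a : (i < d)%N -> (d - i + a - d = a - i)%N.
Proof. move=> hi; by rewrite (addnBAC a (ltnW hi)) subnAC addKn. Qed.
Lemma e2 d i a : (i < d)%N -> (d <= d - i + a)%N = (i <= a)%N.
Proof. move=> hi; rewrite (addnBAC a (ltnW hi)) leq_subRL; last by rewrite (leq_trans (ltnW hi)) ?leq_addr.
by rewrite addnC leq_add2l. Qed.

Section Inv.
Variable T : comNzRingType.
Implicit Types D : {poly T}.

Lemma size_inv_series D n : size (inv_series D n) = n.+1.
Proof. by elim: n => //= n IH; rewrite size_rcons IH. Qed.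

Lemma inv_series_prefix D n m k : (k <= n)%N -> (n <= m)%N ->
  (inv_series D m)`_k = (inv_series D n)`_k.
Proof.
move=> hk; elim: m => [|m IH]; first by rewrite leqn0 => /eqP ->.
rewrite leq_eqVlt => /orP [/eqP -> //|hm].
by rewrite /= nth_rcons size_inv_series ltnS (leq_trans hk) // IH.
Qed.

Lemma inv_seriesE D n k : (k <= n)%N -> (inv_series D n)`_k = inv_coef D k.
Proof. by move=> hk; rewrite /inv_coef (inv_series_prefix _ (leqnn k) hk). Qed.

Lemma inv_coef0 D : inv_coef D 0 = 1.
Proof. by []. Qed.

Lemma inv_coefS D n : inv_coef D n.+1 =
  - \sum_(1 <= j < n.+2) rev_coef D j * inv_coef D (n.+1 - j).
Proof.
rewrite {1}/inv_coef /= nth_rcons size_inv_series ltnn eqxx; congr (- _).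
apply: eq_big_nat => j /andP [hj1 hj2]; rewrite inv_seriesE //.
by rewrite leq_subLR -addn1 addnC leq_add2r.
Qed.

Definition gam D (e : nat) : T :=
  if ((size D).-1 <= e.+1)%N then inv_coef D (e.+1 - (size D).-1) else 0.

Lemma gam_rec D d a : D \is monic -> size D = d.+1 ->
  \sum_(k < d.+1) D`_k * gam D (k + a) = 0.
Proof.
move=> hm hs.
have hDd : D`_d = 1 by move/monicP: hm; rewrite /lead_coef hs.
rewrite big_ord_recr /= hDd mul1r /gam hs /=.
rewrite ifT; last by rewrite (leq_trans (leq_addr a d)).
rewrite -addnS addKn inv_coefS; apply/eqP; rewrite subr_eq0; apply/eqP.
set G := fun i => if (i < a.+1)%N && (i < d)%N then D`_(d - i.+1) * inv_coef D (a - i) else 0.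
transitivity (\sum_(i < a.+1 + d) G i).
  rewrite -(sum_ext (n := d) (m := a.+1 + d) (G := G)) ?leq_addl //; last first.
    by move=> i hi _; rewrite /G (ltnNge i d) hi andbF.
  rewrite (reindex_inj rev_ord_inj) /=; apply: eq_bigr => i _.
  rewrite /G; have hi := ltn_ord i.
  have -> : ((d - i.+1 + a).+1 = d - i + a)%N by rewrite -addSn subnSK.
  rewrite hi andbT ltnS e2 // e1 //.
  by case: ifP => _; rewrite ?mulr0.
rewrite -(sum_ext (n := a.+1) (m := a.+1 + d) (G := G)) ?leq_addr //; last first.
  by move=> i hi _; rewrite /G ltnNge hi.
rewrite big_add1 /= big_mkord; apply: eq_bigr => i _.
rewrite /G /rev_coef hs /= subSS (ltn_ord i) /=.
by case: ifP => _; rewrite ?mul0r.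
Qed.

Lemma sum_delta M k (g : nat -> T) : (k < M)%N ->
  \sum_(i < M) ((i : nat) == k)%:R * g i = g k.
Proof.
move=> hk; rewrite (bigD1 (Ordinal hk)) //= eqxx mul1r big1 ?addr0 // => i hi.
rewrite (_ : ((i : nat) == k) = false) ?mul0r //; apply/negbTE.
by move: hi; apply: contra => /eqP h; apply/eqP/val_inj.
Qed.

Lemma expand_poly (p : {poly T}) M : (size p <= M)%N -> p = \sum_(t < M) p`_t *: 'X^t.
Proof.
move=> hM; rewrite -{1}[p]coefK poly_def.
apply: (sum_ext (G := fun t => p`_t *: 'X^t)) => // i hi _.
by rewrite nth_default // scale0r.
Qed.

Lemma res_infB (N D : {poly T}) B : (size N <= B)%N -> res_inf N D = \sum_(i < B) N`_i * gam D i.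
Proof.
move=> hB; rewrite /res_inf.
rewrite (eq_bigr (fun i : 'I_(size N) => N`_i * gam D i)); last first.
  by move=> i _; rewrite /gam; case: ifP => _; rewrite ?mulr0.
apply: (sum_ext (G := fun i => N`_i * gam D i)) => // i hi _.
by rewrite nth_default // mul0r.
Qed.

Lemma res_bil (D A B : {poly T}) M1 M2 : (size A <= M1)%N -> (size B <= M2)%N ->
  res_inf (A * B) D = \sum_(t < M1) \sum_(l < M2) A`_t * B`_l * gam D (t + l).
Proof.
move=> h1 h2.
rewrite (@res_infB (A * B) D (M1 + M2)); last first.
  apply: leq_trans (size_mul_leq _ _) _; rewrite (leq_trans (leq_pred _)) //.
  exact: leq_add.
rewrite {1}(expand_poly h1) {1}(expand_poly h2) mulr_suml.
under eq_bigr do rewrite coef_sum mulr_suml.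
rewrite exchange_big /=; apply: eq_bigr => t _.
under eq_bigr do rewrite mulr_sumr coef_sum mulr_suml.
rewrite exchange_big /=; apply: eq_bigr => l _.
under eq_bigr do rewrite -scalerAl -scalerAr scalerA -exprD coefZ coefXn -mulrA [_%:R * _]mulrC mulrA.
rewrite (eq_bigr (fun i : 'I_(M1 + M2) => A`_t * B`_l * (((i : nat) == (t + l)%N)%:R * gam D i))); last first.
  by move=> i _; rewrite -[in RHS]mulrA [_%:R * _]mulrC !mulrA.
by rewrite -mulr_sumr sum_delta // -addSn leq_add // ltnW.
Qed.

Lemma res_add (N1 N2 D : {poly T}) : res_inf (N1 + N2) D = res_inf N1 D + res_inf N2 D.
Proof.
set B := maxn (size N1) (size N2).
rewrite (@res_infB (N1 + N2) D B); last by apply: leq_trans (size_add _ _) _.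
rewrite (@res_infB N1 D B) ?leq_maxl // (@res_infB N2 D B) ?leq_maxr //.
by rewrite -big_split /=; apply: eq_bigr => i _; rewrite coefD mulrDl.
Qed.
Lemma res_0 (D : {poly T}) : res_inf 0 D = 0.
Proof. by rewrite /res_inf size_poly0 big_ord0. Qed.
Lemma res_scale c (N D : {poly T}) : res_inf (c *: N) D = c * res_inf N D.
Proof.
rewrite (@res_infB (c *: N) D (size N)) ?size_scale_leq // (@res_infB N D (size N)) //.
by rewrite mulr_sumr; apply: eq_bigr => i _; rewrite coefZ mulrA.
Qed.
Lemma res_sum I r (P : pred I) (G : I -> {poly T}) (D : {poly T}) :
  res_inf (\sum_(i <- r | P i) G i) D = \sum_(i <- r | P i) res_inf (G i) D.
Proof. exact: (big_morph (fun N => res_inf N D) (fun a b => res_add a b D) (res_0 D)). Qed.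

End Inv.
Section Main.
Variables (F : fieldType) (R : comAlgType F) (delta : R -> R).
Hypothesis Hd : is_derivation delta.

Lemma dD a b : delta (a + b) = delta a + delta b.
Proof. by have := (proj1 Hd) 1 a b; rewrite !scale1r. Qed.
Lemma d0 : delta 0 = 0.
Proof. have h := dD 0 0; rewrite addr0 in h; by apply: (addrI (delta 0)); rewrite addr0 -h. Qed.
Lemma dZ c a : delta (c *: a) = c *: delta a.
Proof. by have := (proj1 Hd) c a 0; rewrite !addr0 d0 addr0. Qed.
Lemma dN a : delta (- a) = - delta a.
Proof. by rewrite -scaleN1r dZ scaleN1r. Qed.
Lemma dB a b : delta (a - b) = delta a - delta b.
Proof. by rewrite dD dN. Qed.
Lemma dM a b : delta (a * b) = delta a * b + a * delta b.
Proof. exact: (proj2 Hd). Qed.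
Lemma d1 : delta 1 = 0.
Proof. have h := dM 1 1; rewrite !mul1r mulr1 in h; by apply: (addrI (delta 1)); rewrite addr0 -h. Qed.
Lemma dA c : delta (c%:A) = 0.
Proof. by rewrite dZ d1 scaler0. Qed.
Lemma dsum I r (P : pred I) (G : I -> R) :
  delta (\sum_(i <- r | P i) G i) = \sum_(i <- r | P i) delta (G i).
Proof. exact: (big_morph _ dD d0). Qed.

Local Notation Dp := (Dplus delta).
Local Notation Dm := (Dminus delta).

Lemma coef_Dplus (h : {poly R}) k :
  (Dp h)`_k = delta h`_k + (if k == 0%N then 0 else h`_k.-1).
Proof. by rewrite /Dplus coefD coef_map_id0 ?d0 // coefXM. Qed.
Lemma coef_Dminus (h : {poly R}) k :
  (Dm h)`_k = delta h`_k - (if k == 0%N then 0 else h`_k.-1).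
Proof. by rewrite /Dminus coefB coef_map_id0 ?d0 // coefXM. Qed.

Lemma DplusD a b : Dp (a + b) = Dp a + Dp b.
Proof. apply/polyP => k; rewrite !(coefD, coef_Dplus) dD; case: eqP => _; rewrite ?addr0 -?addrA; congr (_ + _); rewrite addrCA //. Qed.
Lemma DplusN a : Dp (- a) = - Dp a.
Proof. apply/polyP => k; rewrite !(coefN, coef_Dplus) dN; case: eqP => _; rewrite opprD ?coefN ?oppr0 //. Qed.
Lemma Dplus0 : Dp 0 = 0.
Proof. apply/polyP => k; rewrite coef_Dplus coef0 d0 add0r; case: eqP => _; rewrite ?coef0 //. Qed.
Lemma DplusB a b : Dp (a - b) = Dp a - Dp b.
Proof. by rewrite DplusD DplusN. Qed.
Lemma DplusZ (r : R) a : delta r = 0 -> Dp (r *: a) = r *: Dp a.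
Proof. move=> hr; apply/polyP => k; rewrite !(coefZ, coef_Dplus) dM hr mul0r add0r mulrDr; case: eqP => _; rewrite ?mulr0 ?coefZ //. Qed.
Lemma DminusD a b : Dm (a + b) = Dm a + Dm b.
Proof. apply/polyP => k; rewrite !(coefD, coef_Dminus) dD; case: eqP => _; rewrite ?coefD ?subr0 ?opprD; [by []|]; rewrite -!addrA; congr (_ + _); rewrite addrCA //. Qed.
Lemma DminusN a : Dm (- a) = - Dm a.
Proof. apply/polyP => k; rewrite !(coefN, coef_Dminus) dN; case: eqP => _; rewrite opprD ?coefN ?oppr0 //. Qed.

Definition constc (h : {poly R}) := forall k, delta h`_k = 0.
Lemma Dplus_const h : constc h -> Dp h = 'X * h.
Proof. by move=> hc; apply/polyP => k; rewrite coef_Dplus hc add0r coefXM. Qed.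
Lemma constcX h : constc h -> constc ('X * h).
Proof. by move=> hc k; rewrite coefXM; case: eqP => _; rewrite ?d0 ?hc. Qed.
Lemma constcN h : constc h -> constc (- h).
Proof. by move=> hc k; rewrite coefN dN hc oppr0. Qed.
Lemma constc1 : constc 1.
Proof. by move=> k; rewrite coefC; case: eqP => _; rewrite ?d1 ?d0. Qed.
Lemma constcXn n : constc 'X^n.
Proof. by move=> k; rewrite coefXn; case: eqP => _; rewrite ?d1 ?d0. Qed.
Lemma constc_polyR (f : {poly F}) : constc (polyR R f).
Proof. by move=> k; rewrite /polyR coef_map dA. Qed.
Lemma DplusX h : Dp ('X * h) = 'X * Dp h.
Proof.
apply/polyP => k; rewrite !(coefXM, coef_Dplus); case: k => [|k] //=; rewrite ?d0 ?add0r //.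
Qed.
Lemma iter_Dplus_const n h : constc h -> iter n Dp h = 'X^n * h.
Proof.
move=> hc; elim: n => [|n IH] /=; first by rewrite mul1r.
rewrite IH Dplus_const ?exprS ?mulrA //.
elim: n {IH} => [|n IH]; first by rewrite mul1r.
by rewrite exprS -mulrA; apply: constcX.
Qed.

Lemma size_Dplus h : (size (Dp h) <= (size h).+1)%N.
Proof.
apply/leq_sizeP => k hk; rewrite coef_Dplus nth_default ?d0 ?add0r; last by apply: leq_trans hk.
case: eqP => // _; rewrite nth_default //; by case: k hk => //.
Qed.
Lemma size_Dminus h : (size (Dm h) <= (size h).+1)%N.
Proof.
apply/leq_sizeP => k hk; rewrite coef_Dminus nth_default ?d0 ?add0r; last by apply: leq_trans hk.
case: eqP => _; rewrite ?oppr0 // nth_default ?oppr0 //; by case: k hk => //.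
Qed.

Lemma apply_op1 P : apply_op delta P 1 = P.
Proof.
rewrite /apply_op -[RHS]coefK poly_def; apply: eq_bigr => i _.
by rewrite iter_Dplus_const ?mulr1 //; exact: constc1.
Qed.





Lemma iter_DplusD n a b : iter n Dp (a + b) = iter n Dp a + iter n Dp b.
Proof. by elim: n => //= n ->; rewrite DplusD. Qed.
Lemma iter_Dplus0 n : iter n Dp 0 = 0.
Proof. by elim: n => //= n ->; rewrite Dplus0. Qed.
Lemma iter_DplusN n a : iter n Dp (- a) = - iter n Dp a.
Proof. by elim: n => //= n ->; rewrite DplusN. Qed.
Lemma iter_DplusB n a b : iter n Dp (a - b) = iter n Dp a - iter n Dp b.
Proof. by rewrite iter_DplusD iter_DplusN. Qed.
Lemma iter_DplusX n h : iter n Dp ('X * h) = 'X * iter n Dp h.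
Proof. by elim: n => //= n ->; rewrite DplusX. Qed.
Lemma Dplus_sum I r (P : pred I) (G : I -> {poly R}) :
  Dp (\sum_(i <- r | P i) G i) = \sum_(i <- r | P i) Dp (G i).
Proof. exact: (big_morph _ DplusD Dplus0). Qed.

Lemma size_mulX_le (h : {poly R}) : (size ('X * h)%R <= (size h).+1)%N.
Proof.
apply/leq_sizeP => k hk; rewrite coefXM; case: eqP => // _.
by rewrite nth_default //; case: k hk.
Qed.

Definition Eval (v : {poly R}) : {poly R} := \sum_(l < size v) iter l Dp ((v`_l)%:P).

Lemma EvalB (v : {poly R}) B : (size v <= B)%N ->
  Eval v = \sum_(l < B) iter l Dp ((v`_l)%:P).
Proof.
move=> hB; apply: (sum_ext (G := fun l => iter l Dp ((v`_l)%:P))) => // i hi _.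
by rewrite nth_default // iter_Dplus0.
Qed.

Lemma Eval_add a b : Eval (a + b) = Eval a + Eval b.
Proof.
set B := maxn (size a) (size b).
rewrite (EvalB (B:=B)); last by apply: leq_trans (size_add _ _) _.
rewrite (EvalB (v:=a) (B:=B)) ?leq_maxl // (EvalB (v:=b) (B:=B)) ?leq_maxr //.
by rewrite -big_split /=; apply: eq_bigr => i _; rewrite coefD polyCD iter_DplusD.
Qed.
Lemma Eval0 : Eval 0 = 0.
Proof. by rewrite /Eval size_poly0 big_ord0. Qed.
Lemma Eval_opp a : Eval (- a) = - Eval a.
Proof.
by apply/eqP; rewrite -subr_eq0 opprK -Eval_add addNr Eval0.
Qed.
Lemma Eval_sub a b : Eval (a - b) = Eval a - Eval b.
Proof. by rewrite Eval_add Eval_opp. Qed.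
Lemma Eval_sum I r (P : pred I) (G : I -> {poly R}) :
  Eval (\sum_(i <- r | P i) G i) = \sum_(i <- r | P i) Eval (G i).
Proof. exact: (big_morph _ Eval_add Eval0). Qed.

Lemma Eval_X v : Eval ('X * v) = Dp (Eval v).
Proof.
rewrite (EvalB (B := (size v).+1)) ?size_mulX_le // big_ord_recl /= coefXM /=.
rewrite polyC0 add0r /Eval Dplus_sum; apply: eq_bigr => i _.
by rewrite coefXM /bump /= add0n.
Qed.

Lemma DplusC r : Dp r%:P = (delta r)%:P + 'X * r%:P.
Proof.
apply/polyP => k; rewrite coef_Dplus coefD !coefC coefXM coefC.
by case: k => [|k] //=; rewrite ?addr0 // d0 add0r.
Qed.

Lemma Eval_map v : Eval (map_poly delta v) = Dp (Eval v) - 'X * Eval v.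
Proof.
rewrite (EvalB (B := size v)); last exact: size_map_le.
rewrite /Eval Dplus_sum mulr_sumr -sumrB; apply: eq_bigr => i _.
rewrite coef_map_id0 ?d0 //.
have -> : (delta v`_i)%:P = Dp (v`_i)%:P - 'X * (v`_i)%:P by rewrite DplusC addrK.
by rewrite iter_DplusB iter_DplusX -iterSr.
Qed.

Lemma Eval_Dminus v : Eval (Dm v) = - ('X * Eval v).
Proof. by rewrite /Dminus Eval_sub Eval_map Eval_X addrAC subrr add0r. Qed.

Lemma Eval_C r : Eval r%:P = r%:P.
Proof.
rewrite (EvalB (B := 1)) ?size_polyC ?leq_b1 // big_ord1 /=.
by rewrite coefC.
Qed.

Lemma Eval_adj1 Q : Eval (apply_adj delta Q 1) = Q.
Proof.
rewrite /apply_adj.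
rewrite Eval_sum -[RHS]coefK poly_def; apply: eq_bigr => i _.
have h : forall n u, Eval (iter n (fun u => - Dm u) u) = 'X^n * Eval u.
  move=> n u; elim: n => [|n IH] /=; first by rewrite mul1r.
  by rewrite Eval_opp Eval_Dminus opprK IH exprS mulrA.
by rewrite h alg_polyC Eval_C mulrC mul_polyC.
Qed.

Lemma Eval_iter_Dminus j v :
  Eval (iter j Dm v) = iter j (fun h => - ('X * h)) 1 * Eval v.
Proof.
elim: j => [|j IH] /=; first by rewrite mul1r.
by rewrite Eval_Dminus IH mulrA mulNr.
Qed.

Definition cj (j : nat) : {poly R} := iter j (fun h => - ('X * h)) 1.
Lemma constc_cj j : constc (cj j).
Proof.
elim: j => [|j IH] /=; first exact: constc1.
by apply: constcN; apply: constcX.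
Qed.
Lemma size_cj j : (size (cj j) <= j.+1)%N.
Proof.
elim: j => [|j IH] /=; first by rewrite size_poly1.
by rewrite size_opp (leq_trans (size_mulX_le _)).
Qed.

Lemma apply_op_const Q c : constc c -> apply_op delta Q c = Q * c.
Proof.
move=> hc; rewrite /apply_op -[in RHS](coefK Q) poly_def mulr_suml.
by apply: eq_bigr => i _; rewrite iter_Dplus_const // scalerAl.
Qed.

Local Notation S := (nat -> R).
Definition Ds (y : S) : S := fun k => delta (y k) + y k.+1.
Definition Op (A : {poly R}) (y : S) : S :=
  fun k => \sum_(t < size A) A`_t * iter t Ds y k.
Definition addS (y y' : S) : S := fun k => y k + y' k.
Definition oppS (y : S) : S := fun k => - y k.
Definition scS (r : R) (y : S) : S := fun k => r * y k.
Definition zeroS : S := fun _ => 0.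
Definition sumS n (W : nat -> S) : S := fun k => \sum_(l < n) W l k.

Lemma Ds_add y y' : Ds (addS y y') = addS (Ds y) (Ds y').
Proof. apply: functional_extensionality => k; rewrite /Ds /addS dD addrACA //. Qed.
Lemma Ds_opp y : Ds (oppS y) = oppS (Ds y).
Proof. apply: functional_extensionality => k; by rewrite /Ds /oppS dN opprD. Qed.
Lemma Ds_zero : Ds zeroS = zeroS.
Proof. apply: functional_extensionality => k; by rewrite /Ds /zeroS d0 addr0. Qed.
Lemma Ds_sc r y : delta r = 0 -> Ds (scS r y) = scS r (Ds y).
Proof. move=> hr; apply: functional_extensionality => k; by rewrite /Ds /scS dM hr mul0r add0r mulrDr. Qed.
Lemma iter_Ds_add n y y' : iter n Ds (addS y y') = addS (iter n Ds y) (iter n Ds y').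
Proof. by elim: n => //= n ->; rewrite Ds_add. Qed.
Lemma iter_Ds_opp n y : iter n Ds (oppS y) = oppS (iter n Ds y).
Proof. by elim: n => //= n ->; rewrite Ds_opp. Qed.
Lemma iter_Ds_zero n : iter n Ds zeroS = zeroS.
Proof. by elim: n => //= n ->; rewrite Ds_zero. Qed.
Lemma iter_Ds_sc n r y : delta r = 0 -> iter n Ds (scS r y) = scS r (iter n Ds y).
Proof. by move=> hr; elim: n => //= n ->; rewrite Ds_sc. Qed.
Lemma iter_Ds_sum n m (W : nat -> S) k :
  iter n Ds (sumS m W) k = \sum_(l < m) iter n Ds (W l) k.
Proof.
elim: m k => [|m IH] k.
  have -> : sumS 0 W = zeroS by apply: functional_extensionality => i; rewrite /sumS big_ord0.
  by rewrite iter_Ds_zero big_ord0.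
have -> : sumS m.+1 W = addS (sumS m W) (W m).
  by apply: functional_extensionality => i; rewrite /sumS /addS big_ord_recr.
by rewrite iter_Ds_add /addS IH big_ord_recr.
Qed.

Lemma OpB (A : {poly R}) (y : S) (k B : nat) : (size A <= B)%N ->
  Op A y k = \sum_(t < B) A`_t * iter t Ds y k.
Proof.
move=> hB; rewrite /Op; apply: (sum_ext (G := fun t => A`_t * iter t Ds y k)) => // i hi _.
by rewrite nth_default // mul0r.
Qed.

Lemma Op_add A B y k : Op (A + B) y k = Op A y k + Op B y k.
Proof.
set M := maxn (size A) (size B).
rewrite (@OpB (A + B) y k M); last by apply: leq_trans (size_add _ _) _.
rewrite (@OpB A y k M) ?leq_maxl // (@OpB B y k M) ?leq_maxr //.
by rewrite -big_split /=; apply: eq_bigr => i _; rewrite coefD mulrDl.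
Qed.
Lemma Op0 y k : Op 0 y k = 0.
Proof. by rewrite /Op size_poly0 big_ord0. Qed.
Lemma Op_scale r A y k : Op (r *: A) y k = r * Op A y k.
Proof.
rewrite (@OpB _ y k (size A)) ?size_scale_leq // /Op mulr_sumr.
by apply: eq_bigr => i _; rewrite coefZ mulrA.
Qed.
Lemma Op_sum I s (P : pred I) (G : I -> {poly R}) y k :
  Op (\sum_(i <- s | P i) G i) y k = \sum_(i <- s | P i) Op (G i) y k.
Proof. exact: (big_morph (fun A => Op A y k) (fun A B => Op_add A B y k) (Op0 y k)). Qed.

Lemma Op_Dplus A y : Op (Dplus delta A) y = Ds (Op A y).
Proof.
apply: functional_extensionality => k.
rewrite (@OpB _ y k (size A).+1) ?size_Dplus //.
have -> : Ds (Op A y) k = delta (Op A y k) + Op A y k.+1 by [].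
rewrite /Op dsum.
under eq_bigr do rewrite coef_Dplus mulrDl.
rewrite big_split /= big_ord_recr /= nth_default // d0 mul0r addr0.
rewrite big_ord_recl /= mul0r add0r.
under [in RHS]eq_bigr do rewrite dM.
rewrite big_split /= -addrA; congr (_ + _).
rewrite -big_split /=; apply: eq_bigr => i _.
by rewrite /bump /= add0n -mulrDr.
Qed.

Lemma Op_iter_Dplus n A y : Op (iter n (Dplus delta) A) y = iter n Ds (Op A y).
Proof. by elim: n => //= n IH; rewrite Op_Dplus IH. Qed.

Lemma Op_comp Q P y : Op (apply_op delta Q P) y = Op Q (Op P y).
Proof.
apply: functional_extensionality => k.
rewrite /apply_op Op_sum [RHS]/Op; apply: eq_bigr => i _.
by rewrite Op_scale Op_iter_Dplus.
Qed.

Lemma Op_X A y : Op ('X * A) y = Op A (Ds y).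
Proof.
apply: functional_extensionality => k.
rewrite (@OpB _ y k (size A).+1) ?size_mulX_le // big_ord_recl /= coefXM /= mul0r add0r.
rewrite /Op; apply: eq_bigr => i _.
by rewrite coefXM /bump /= add0n -[Ds (iter i Ds y)]/(iter i.+1 Ds y) iterSr.
Qed.

Lemma Op_const_Ds A y : constc A -> Op A (Ds y) = Ds (Op A y).
Proof. by move=> hA; rewrite -Op_Dplus Dplus_const // Op_X. Qed.
Lemma Op_const_iter_Ds n A y : constc A -> Op A (iter n Ds y) = iter n Ds (Op A y).
Proof. by move=> hA; elim: n => //= n <-; rewrite Op_const_Ds. Qed.

Lemma Op_addS A y y' : Op A (addS y y') = addS (Op A y) (Op A y').
Proof.
apply: functional_extensionality => k.
by rewrite /Op /addS -big_split /=; apply: eq_bigr => i _; rewrite iter_Ds_add /addS mulrDr.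
Qed.
Lemma Op_oppS A y : Op A (oppS y) = oppS (Op A y).
Proof.
apply: functional_extensionality => k.
by rewrite /Op /oppS -sumrN; apply: eq_bigr => i _; rewrite iter_Ds_opp /oppS mulrN.
Qed.
Lemma Op_zeroS A : Op A zeroS = zeroS.
Proof.
apply: functional_extensionality => k.
by rewrite /Op /zeroS big1 // => i _; rewrite iter_Ds_zero mulr0.
Qed.
Lemma Op_sumS A n (W : nat -> S) k : Op A (sumS n W) k = \sum_(l < n) Op A (W l) k.
Proof.
rewrite /Op exchange_big /=; apply: eq_bigr => i _.
by rewrite iter_Ds_sum mulr_sumr.
Qed.
Definition iota (N : nat) (U : {poly R}) : S := fun k => if (k <= N)%N then U`_(N - k) else 0.

Lemma Ds_iota N U : Ds (iota N U) = iota N (Dplus delta U).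
Proof.
apply: functional_extensionality => k; rewrite /Ds /iota coef_Dplus.
case: (ltngtP k N) => hk.
- by rewrite subn_eq0 leqNgt hk /= subnS.
- by rewrite d0 addr0.
- by rewrite hk subnn.
Qed.
Lemma iter_Ds_iota n N U : iter n Ds (iota N U) = iota N (iter n (Dplus delta) U).
Proof. by elim: n => //= n ->; rewrite Ds_iota. Qed.

Lemma iota_sum N n (c : nat -> R) (H : nat -> {poly R}) k :
  iota N (\sum_(i < n) c i *: H i) k = \sum_(i < n) c i * iota N (H i) k.
Proof.
rewrite /iota; case: ifP => _; last by rewrite big1 // => i _; rewrite mulr0.
by rewrite coef_sum; apply: eq_bigr => i _; rewrite coefZ.
Qed.

Lemma Op_iota A N U : Op A (iota N U) = iota N (apply_op delta A U).
Proof.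
apply: functional_extensionality => k.
rewrite /apply_op (@iota_sum N (size A) (fun i => A`_i) (fun i => iter i (Dplus delta) U)).
by rewrite /Op; apply: eq_bigr => i _; rewrite iter_Ds_iota.
Qed.

Definition tz (K : nat) (y : S) := forall k, (k < K)%N -> y k = 0.

Lemma tz_Ds K y : tz K.+1 y -> tz K (Ds y).
Proof. by move=> h k hk; rewrite /Ds !h ?d0 ?addr0 // ltnW. Qed.
Lemma tz_iter l K y : tz (K + l) y -> tz K (iter l Ds y).
Proof.
elim: l K y => [|l IH] K y /=; first by rewrite addn0.
move=> h; apply: tz_Ds; apply: IH; by rewrite addSnnS.
Qed.
Lemma tz_le K K' y : (K' <= K)%N -> tz K y -> tz K' y.
Proof. by move=> hK h k hk; apply: h; apply: leq_trans hK. Qed.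

Lemma lead_iter l K y : tz K y -> (l <= K)%N -> iter l Ds y (K - l)%N = y K.
Proof.
elim: l => [|l IH] hy hl /=; first by rewrite subn0.
rewrite /Ds (tz_iter (K := K - l) (l := l)) ?d0 ?add0r; first last.
- by rewrite subnS prednK ?subn_gt0 // ltnW.
- by rewrite subnK // ltnW.
- by rewrite subnS prednK ?subn_gt0 // IH // ltnW.
Qed.

Lemma tz_Op (A : {poly R}) K s y : tz (K + s) y -> (size A <= s.+1)%N -> tz K (Op A y).
Proof.
move=> hy hA k hk; rewrite /Op big1 // => i _.
rewrite (tz_iter (K := K + s - i) (l := i)) ?mulr0 //.
- by rewrite subnK // (leq_trans _ (leq_addl K s)) // -ltnS (leq_trans _ hA).
- by apply: leq_trans hk _; rewrite -addnBA ?leq_addr // -ltnS (leq_trans _ hA).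
Qed.

Lemma Op_lead (A : {poly R}) s K y : A \is monic -> size A = s.+1 -> tz K y -> (s <= K)%N ->
  Op A y (K - s)%N = y K.
Proof.
move=> hm hs hy hK; rewrite /Op hs big_ord_recr /=.
have -> : A`_s = 1 by move/monicP: hm; rewrite /lead_coef hs.
rewrite mul1r lead_iter // big1 ?add0r // => i _.
rewrite (tz_iter (K := K - i) (l := i)) ?mulr0 //.
- by rewrite subnK // (leq_trans _ hK) // ltnW.
- by rewrite ltn_sub2l // (leq_trans _ hK).
Qed.

Lemma Op_inj (A : {poly R}) s y : A \is monic -> size A = s.+1 -> tz s y ->
  (forall k, Op A y k = 0) -> forall k, y k = 0.
Proof.
move=> hm hs hy h0.
have H : forall n, tz (s + n) y.
  elim=> [|n IH]; first by rewrite addn0.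
  move=> k; rewrite addnS ltnS leq_eqVlt => /orP [/eqP ->|]; last exact: IH.
  by rewrite -(Op_lead hm hs IH (leq_addr _ _)) h0.
by move=> k; apply: (H k.+1); rewrite addnS ltnS leq_addl.
Qed.
Definition xs (G : S -> S) s := iter s G zeroS.
Definition solG (G : S -> S) : S := fun K => xs G K.+1 K.

Lemma xs_stable (G : S -> S) :
  (forall w w' K, (forall k, (k < K)%N -> w k = w' k) -> G w K = G w' K) ->
  forall s k, (k < s)%N -> xs G s k = xs G s.+1 k.
Proof.
move=> HG; elim=> [|s IH] k // hk.
rewrite /xs /=; apply: (HG) => i hi; apply: IH.
by apply: leq_trans hi _.
Qed.
Lemma xs_stable2 (G : S -> S) :
  (forall w w' K, (forall k, (k < K)%N -> w k = w' k) -> G w K = G w' K) ->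
  forall s t k, (k < s)%N -> (s <= t)%N -> xs G s k = xs G t k.
Proof.
move=> HG s t k hk hst; elim: t hst => [|t IH]; first by rewrite leqn0 => /eqP h; subst s.
rewrite leq_eqVlt => /orP [/eqP <- //|hst].
by rewrite IH // (xs_stable HG) // (leq_trans hk).
Qed.
Lemma solG_fix (G : S -> S) :
  (forall w w' K, (forall k, (k < K)%N -> w k = w' k) -> G w K = G w' K) ->
  forall K, solG G K = G (solG G) K.
Proof.
move=> HG K; rewrite /solG /xs /=; apply: (HG) => k hk.
rewrite -[G (iter k G zeroS)]/(xs G k.+1) -/(xs G K); symmetry; exact: xs_stable2.
Qed.

Section Solve.
Variables (D : {poly R}) (d : nat) (y : S).
Hypotheses (HDm : D \is monic) (HDs : size D = d.+1).

Definition GD (w : S) : S :=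
  fun K => if (K < d)%N then 0 else w K + y (K - d)%N - Op D w (K - d)%N.

Lemma GD_dep w w' K : (forall k, (k < K)%N -> w k = w' k) -> GD w K = GD w' K.
Proof.
move=> h; rewrite /GD; case: ifP => // /negbT; rewrite -leqNgt => hK.
set e := addS w (oppS w').
have he : tz K e by move=> k hk; rewrite /e /addS /oppS h // subrr.
have := Op_lead HDm HDs he hK.
rewrite /e Op_addS Op_oppS /addS /oppS => /eqP; rewrite subr_eq => /eqP ->.
rewrite opprD opprB addrA; congr (_ - _).
by rewrite addrC addrA subrK addrC.
Qed.

Definition solD : S := solG GD.

Lemma solD_eq k : Op D solD k = y k.
Proof.
have := solG_fix GD_dep (k + d); rewrite -/solD /GD ltnNge leq_addl /= addnK.
rewrite -addrA -{1}[solD (k + d)%N]addr0 => /addrI /eqP.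
by rewrite eq_sym subr_eq0 => /eqP ->.
Qed.

Lemma solD_tz N : tz N y -> tz (N + d) solD.
Proof.
move=> hy.
suff H : forall K, (K <= N + d)%N -> tz K solD by apply: H.
elim=> [|K IH] hK; first by [].
have IH' := IH (ltnW hK).
move=> k; rewrite ltnS leq_eqVlt => /orP [/eqP ->|hk]; last exact: IH'.
rewrite /solD solG_fix; last exact: GD_dep.
rewrite -/solD (@GD_dep _ zeroS) => [|k' hk']; last by rewrite IH'.
rewrite /GD; case: ifP => // /negbT; rewrite -leqNgt => hd.
rewrite Op_zeroS /zeroS hy ?subrr ?addr0 ?add0r.
- by rewrite oppr0.
- by rewrite ltn_subLR // addnC.
Qed.

End Solve.
Section Res.
Variables (D : {poly R}) (d N : nat).
Hypotheses (HDm : D \is monic) (HDs : size D = d.+1) (HDc : constc D).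

Lemma tz_iotaC (r : R) : tz N (iota N r%:P).
Proof.
move=> k hk; rewrite /iota (ltnW hk) coefC.
by rewrite subn_eq0 leqNgt hk.
Qed.
Lemma iotaC_N (r : R) : iota N r%:P N = r.
Proof. by rewrite /iota leqnn subnn coefC. Qed.

Definition wr (r : R) : S := solD D d (iota N r%:P).

Lemma OpD_w r : Op D (wr r) = iota N r%:P.
Proof. apply: functional_extensionality => k; exact: solD_eq. Qed.

Lemma rho r e : iter e Ds (wr r) N.+1 = r * gam D e.
Proof.
have tzw : tz (N + d) (wr r) by apply: solD_tz => //; exact: tz_iotaC.
elim/ltn_ind: e => e IH.
rewrite /gam HDs /=.
case: (ltngtP e.+1 d) => he.
- rewrite mulr0; apply: (tz_iter (K := (N + d - e)%N)).
    by rewrite subnK // (@leq_trans d) ?leq_addl // (ltnW (ltnW he)).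
  by rewrite ltn_subRL [(e + _)%N]addnC addSn -addnS ltn_add2l.
- have hde : (d <= e)%N by [].
  set a := (e - d)%N.
  have ea : e = (d + a)%N by rewrite /a subnKC.
  have h1 : \sum_(k < d.+1) D`_k * iter (k + a) Ds (wr r) N.+1 = 0.
    have := congr1 (fun y => iter a Ds y N.+1) (OpD_w r).
    rewrite /= iter_Ds_iota {1}/iota ltnn -Op_const_iter_Ds //.
    move=> h; transitivity (Op D (iter a Ds (wr r)) N.+1); last exact: h.
    rewrite /Op HDs; apply: eq_bigr => k _; by rewrite iterD.
  have h2 := gam_rec a HDm HDs.
  rewrite big_ord_recr /= in h1; rewrite big_ord_recr /= in h2.
  have hDd : D`_d = 1 by move/monicP: HDm; rewrite /lead_coef HDs.
  rewrite hDd !mul1r -ea in h1 h2.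
  rewrite (eq_bigr (fun k : 'I_d => r * (D`_k * gam D (k + a)))) in h1; last first.
    move=> k _; rewrite IH; first by rewrite mulrCA.
    by rewrite ea ltn_add2r.
  rewrite -mulr_sumr in h1.
  move/eqP: h2; rewrite addrC addr_eq0 => /eqP h2.
  move/eqP: h1; rewrite addrC addr_eq0 => /eqP ->.
  have -> : inv_coef D (e.+1 - d) = gam D e by rewrite /gam HDs /= ifT // ltnW.
  by rewrite h2 mulrN.
- rewrite he subnn inv_coef0 mulr1.
  have : iter e Ds (wr r) (N + d - e)%N = wr r (N + d)%N.
    apply: lead_iter => //; apply: (@leq_trans d); [by rewrite -he | exact: leq_addl].
  have hidx : (N + d - e = N.+1)%N by rewrite -he addnS subSn ?leq_addl // addnK.
  rewrite hidx => ->.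
  have := Op_lead HDm HDs tzw (leq_addl N d).
  by rewrite addnK OpD_w iotaC_N.
Qed.
End Res.
Lemma iota_sum1 N n (H : 'I_n -> {poly R}) k :
  iota N (\sum_(i < n) H i) k = \sum_(i < n) iota N (H i) k.
Proof.
rewrite /iota; case: ifP => _; last by rewrite big1.
by rewrite coef_sum.
Qed.

Lemma tz_sumS K n (W : nat -> S) : (forall l, (l < n)%N -> tz K (W l)) -> tz K (sumS n W).
Proof. by move=> h k hk; rewrite /sumS big1 // => l _; apply: h. Qed.

Lemma tz_iota_small N (c : {poly R}) j : (size c <= j.+1)%N -> tz (N - j) (iota N c).
Proof.
move=> hc k hk; rewrite /iota; case: ifP => // hkN.
rewrite nth_default //; apply: leq_trans hc _.
by rewrite ltn_subRL addnC -ltn_subRL.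
Qed.

Lemma monic_size_pos (A : {poly R}) : A \is monic -> size A = (size A).-1.+1.
Proof. by move=> hm; rewrite prednK // size_poly_gt0 monic_neq0. Qed.

Lemma main1 (f g : {poly F}) (P Q : {poly R}) :
  f \is monic -> g \is monic -> Q \is monic ->
  apply_op delta Q (apply_op delta P 1) = polyR R f * polyR R g ->
  forall i j, res_inf (iter i (Dplus delta) (apply_op delta P 1) *
                       iter j (Dminus delta) (apply_adj delta Q 1)) (polyR R f * polyR R g) = 0.
Proof.
move=> hf hg hQ hcomp i j.
rewrite apply_op1 in hcomp *.
set D := polyR R f * polyR R g.
have hDm : D \is monic by rewrite /D monicMl /polyR ?monic_map.
have hDc : constc D.
  have -> : D = polyR R (f * g) by rewrite /D /polyR rmorphM.
  exact: constc_polyR.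
set d := (size D).-1.
have hDs : size D = d.+1 by rewrite /d -monic_size_pos.
set m := (size Q).-1.
have hQs : size Q = m.+1 by rewrite /m -monic_size_pos.
set a := iter i (Dplus delta) P.
set bh := iter j (Dminus delta) (apply_adj delta Q 1).
set L := size bh.
set N := (m + size P + L + j + 1)%N.
set w := fun l => wr D d N bh`_l.
set u := sumS L (fun l => iter l Ds (w l)).
have step2 : res_inf (a * bh) D = Op a u N.+1.
  rewrite (@res_bil _ D a bh (size a) L) // /Op; apply: eq_bigr => t _.
  rewrite iter_Ds_sum mulr_sumr; apply: eq_bigr => l _.
  by rewrite -iterD /w rho // mulrA.
rewrite step2 /a Op_iter_Dplus.
set c := cj j.
have step4 : Op P u = iota N c.
  apply: functional_extensionality => k.
  set y := addS (Op P u) (oppS (iota N c)).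
  suff : y k = 0 by rewrite /y /addS /oppS => /eqP; rewrite subr_eq0 => /eqP.
  have tzu : tz (m + size P) u.
    apply: tz_sumS => l hl; apply: tz_iter.
    apply: (tz_le (K := (N + d)%N)).
      apply: leq_trans (leq_addr d N); rewrite /N -!addnA leq_add2l leq_add2l.
      by rewrite (leq_trans (ltnW hl)) // leq_addr.
    by apply: solD_tz => //; exact: tz_iotaC.
  have tzOp : tz m (Op P u) := tz_Op tzu (leqnSn _).
  have tzc : tz m (iota N c).
    apply: (tz_le (K := (N - j)%N)); last exact: tz_iota_small (size_cj j).
    exact: natx1.
  apply: (@Op_inj Q m y hQ hQs).
    by move=> k' hk'; rewrite /y /addS /oppS tzOp // tzc // oppr0 addr0.
  move=> k'; rewrite /y Op_addS Op_oppS /addS /oppS -Op_comp hcomp Op_iota apply_op_const; last exact: constc_cj.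
  rewrite Op_sumS.
  under eq_bigr do rewrite Op_const_iter_Ds // /w OpD_w // iter_Ds_iota.
  rewrite -iota_sum1.
  have -> : \sum_(l < L) iter l (Dplus delta) (bh`_l)%:P = Eval bh by [].
  by rewrite /bh Eval_iter_Dminus Eval_adj1 -/c mulrC subrr.
by rewrite step4 iter_Ds_iota /iota ltnn.
Qed.
Lemma nth_map0 (s : seq F) k : (map (in_alg R) s)`_k = in_alg R s`_k.
Proof. elim: s k => [|x s IH] [|k] //=; by rewrite ?IH ?in_algE ?scale0r. Qed.

Lemma size_polyR (h : {poly F}) : size (polyR R h) = size h.
Proof. by rewrite /polyR size_map_inj_poly ?rmorph0 //; exact: fmorph_inj. Qed.

Lemma rev_coef_map (h : {poly F}) j : rev_coef (polyR R h) j = in_alg R (rev_coef h j).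
Proof.
rewrite /rev_coef size_polyR; case: ifP => _; last by rewrite rmorph0.
by rewrite /polyR coef_map.
Qed.

Lemma inv_series_map (h : {poly F}) n :
  inv_series (polyR R h) n = map (in_alg R) (inv_series h n).
Proof.
elim: n => [|n IH] /=; first by rewrite ?in_algE scale1r.
rewrite IH map_rcons; congr rcons.
rewrite rmorphN rmorph_sum; congr (- _); apply: eq_bigr => j _.
by rewrite rmorphM rev_coef_map nth_map0.
Qed.

Lemma gam_map (h : {poly F}) e : gam (polyR R h) e = in_alg R (gam h e).
Proof.
rewrite /gam size_polyR; case: ifP => _; last by rewrite rmorph0.
by rewrite /inv_coef inv_series_map nth_map0.
Qed.

Section Ev.
Variables (SS : pred R) (ev : R -> F).
Hypothesis Hreg : regular_at0 delta SS ev.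

Lemma inA c : c%:A \in SS. Proof. by case: Hreg => h _ _; case: (h c). Qed.
Lemma evA c : ev c%:A = c. Proof. by case: Hreg => h _ _; case: (h c). Qed.
Lemma inD x y : x \in SS -> y \in SS -> x + y \in SS.
Proof. by case: Hreg => _ h _ hx hy; case: (h x y hx hy). Qed.
Lemma inM x y : x \in SS -> y \in SS -> x * y \in SS.
Proof. by case: Hreg => _ h _ hx hy; case: (h x y hx hy). Qed.
Lemma evD x y : x \in SS -> y \in SS -> ev (x + y) = ev x + ev y.
Proof. by case: Hreg => _ h _ hx hy; case: (h x y hx hy). Qed.
Lemma evM x y : x \in SS -> y \in SS -> ev (x * y) = ev x * ev y.
Proof. by case: Hreg => _ h _ hx hy; case: (h x y hx hy). Qed.
Lemma indelta x : x \in SS -> delta x \in SS.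
Proof. by case: Hreg => _ _ h; apply: h. Qed.
Lemma in0 : 0 \in SS. Proof. by have := inA 0; rewrite scale0r. Qed.
Lemma ev0 : ev 0 = 0. Proof. by have := evA 0; rewrite scale0r. Qed.
Lemma inN x : x \in SS -> - x \in SS.
Proof.
move=> hx; have -> : - x = (-1)%:A * x by rewrite -scalerAl mul1r scaleN1r.
by apply: inM => //; exact: inA.
Qed.

Definition polyS (h : {poly R}) := forall k, h`_k \in SS.
Lemma polyS_Dplus h : polyS h -> polyS (Dplus delta h).
Proof.
move=> hh k; rewrite coef_Dplus; apply: inD; first exact: indelta.
by case: eqP => _; [exact: in0 | exact: hh].
Qed.
Lemma polyS_Dminus h : polyS h -> polyS (Dminus delta h).
Proof.
move=> hh k; rewrite coef_Dminus; apply: inD; first exact: indelta.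
by apply: inN; case: eqP => _; [exact: in0 | exact: hh].
Qed.

Lemma ev_sum I r (P : pred I) (G : I -> R) : (forall i, G i \in SS) ->
  (\sum_(i <- r | P i) G i \in SS) /\ ev (\sum_(i <- r | P i) G i) = \sum_(i <- r | P i) ev (G i).
Proof.
move=> hG; apply: (big_rec2 (fun x y => x \in SS /\ ev x = y)); first by split; [exact: in0 | exact: ev0].
move=> i x y _ [hx <-]; split; first by apply: inD.
by rewrite evD.
Qed.
End Ev.
Lemma main2 (f g : {poly F}) (P Q : {poly R}) :
  f \is monic -> g \is monic -> Q \is monic ->
  apply_op delta Q (apply_op delta P 1) = polyR R f * polyR R g ->
  forall (SS : pred R) (ev : R -> F), regular_at0 delta SS ev ->
  (forall k, (apply_op delta P 1)`_k \in SS) -> (forall k, (apply_adj delta Q 1)`_k \in SS) ->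
  forall (n m : nat) (a b : nat -> F),
  res_inf ((\sum_(i < n) a i *: map_poly ev (iter i (Dplus delta) (apply_op delta P 1))) *
           (\sum_(j < m) b j *: map_poly ev (iter j (Dminus delta) (apply_adj delta Q 1)))) (f * g) = 0.
Proof.
move=> hf hg hQ hcomp SS ev hreg hp hq n m a b.
have H1 := main1 hf hg hQ hcomp.
have hev0 := ev0 hreg.
rewrite mulr_suml res_sum big1 // => i _.
rewrite mulr_sumr res_sum big1 // => j _.
rewrite -scalerAl -scalerAr !res_scale.
set U := iter i (Dplus delta) (apply_op delta P 1).
set V := iter j (Dminus delta) (apply_adj delta Q 1).
have hU : forall k, U`_k \in SS.
  rewrite /U; elim: (nat_of_ord i) => [|i' IH] //=; exact: (polyS_Dplus hreg IH).
have hV : forall k, V`_k \in SS.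
  rewrite /V; elim: (nat_of_ord j) => [|j' IH] //=; exact: (polyS_Dminus hreg IH).
suff -> : res_inf (map_poly ev U * map_poly ev V) (f * g) = 0 by rewrite !mulr0.
have h0 := H1 i j; rewrite -/U -/V in h0.
rewrite (@res_bil _ _ _ _ (size U) (size V)) ?size_map_le // in h0.
rewrite (@res_bil _ _ _ _ (size U) (size V)) ?size_map_le //.
have hD : polyR R f * polyR R g = polyR R (f * g) by rewrite /polyR rmorphM.
rewrite hD in h0.
transitivity (ev (\sum_(t < size U) \sum_(l < size V) U`_t * V`_l * gam (polyR R (f * g)) (t + l))); last by rewrite h0 hev0.
symmetry.
have inG : forall (t : 'I_(size U)) (l : 'I_(size V)),
    U`_t * V`_l * gam (polyR R (f * g)) (t + l) \in SS.
  move=> t l; apply: (inM hreg) => //; first exact: (inM hreg).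
  by rewrite gam_map in_algE; exact: (inA hreg).
have outer := fun t => ev_sum hreg (index_enum 'I_(size V)) xpredT (inG t).
rewrite (proj2 (ev_sum hreg (index_enum 'I_(size U)) xpredT (fun t => proj1 (outer t)))).
apply: eq_bigr => t _.
rewrite (proj2 (outer t)).
apply: eq_bigr => l _.
rewrite !coef_map_id0 // (evM hreg) //; last by rewrite gam_map in_algE; exact: (inA hreg).
rewrite (evM hreg) // gam_map in_algE (evA hreg) //.
exact: (inM hreg).
Qed.
End Main.

Unset Implicit Arguments.

Theorem mainTheorem2 (F : fieldType) (R : comAlgType F) (delta : R -> R)
  (f g : {poly F}) (P Q : {poly R}) :
  is_derivation delta ->
  f \is monic -> g \is monic -> P \is monic -> Q \is monic ->
  size P = size f ->
  apply_op delta Q (apply_op delta P 1) = polyR R f * polyR R g ->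
  let p := apply_op delta P 1 in
  let qs := apply_adj delta Q 1 in
  (forall i j : nat,
     res_inf (iter i (Dplus delta) p * iter j (Dminus delta) qs)
             (polyR R f * polyR R g) = 0)
  /\
  (forall (S : pred R) (ev : R -> F),
     regular_at0 delta S ev ->
     (forall k, p`_k \in S) -> (forall k, qs`_k \in S) ->
     forall (n m : nat) (a b : nat -> F),
       let u := \sum_(i < n) a i *: map_poly ev (iter i (Dplus delta) p) in
       let v := \sum_(j < m) b j *: map_poly ev (iter j (Dminus delta) qs) in
       res_inf (u * v) (f * g) = 0).
Proof.
move=> Hd hf hg hP hQ hs hcomp p qs; split.
  by move=> i j; exact: (main1 Hd hf hg hQ hcomp i j).
move=> S ev hreg hp hq n m a b u v.
exact: (main2 Hd hf hg hQ hcomp hreg hp hq n m a b).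
Qed.
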